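(* Let $G\ge 2$ and $p_t\in(0,1)$. Let $r_{t,1},\dots,r_{t,G}$ be i.i.d. $\mathrm{Bernoulli}(p_t)$, $R=\sum_j r_{t,j}$, $\hat p_t=R/G$, $\hat A_{t,i}=r_{t,i}-\hat p_t$, $A_{t,i}=r_{t,i}-p_t$, $\mathcal S=\{1\le R\le G-1\}$, and fix $i\in[G]$. (a) If $p_t<1/2$, then for every $\epsilon\in\bigl(0,\ \mathbb E[\hat p_t\mid\mathcal S]-p_t\bigr)$, \[ \mathbb P\!\left(A_{t,i}-\hat A_{t,i}>\epsilon\mid\mathcal S\right)=\frac{\sum_{k=\lfloor G(p_t+\epsilon)\rfloor+1}^{G-1}\binom{G}{k}p_t^k(1-p_t)^{G-k}}{1-(1-p_t)^G-p_t^G}. \] (b) If $p_t>1/2$, then for every $\epsilon\in\bigl(0,\ p_t-\mathbb E[\hat p_t\mid\mathcal S]\bigr)$, \[ \mathbb P\!\left(\hat A_{t,i}-A_{t,i}>\epsilon\mid\mathcal S\right)=\frac{\sum_{k=1}^{\lceil G(p_t-\epsilon)\rceil-1}\binom{G}{k}p_t^k(1-p_t)^{G-k}}{1-(1-p_t)^G-p_t^G}. \]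
   Context: Binary-reward group setting: $G$ i.i.d. Bernoulli$(p_t)$ rewards for one prompt, group baseline $\hat p_t$, group-relative advantage $\hat A_{t,i}$, expected advantage $A_{t,i}$, and non-degenerate event $\mathcal S$. A prompt with $p_t<1/2$ is called hard and one with $p_t>1/2$ easy. *)

(* Defs.v *)
From HB Require Import structures.
From mathcomp Require Import all_boot all_order all_algebra.
From mathcomp Require Import reals.
Set Implicit Arguments. Unset Strict Implicit. Unset Printing Implicit Defensive.
Import Order.TTheory GRing.Theory Num.Theory.
Local Open Scope ring_scope.

Definition outcome (G : nat) := {ffun 'I_G -> bool}.

Definition weight (R : realType) (G : nat) (p : R) (w : outcome G) : R :=
  \prod_(j < G) (if w j then p else 1 - p).

Definition Pr (R : realType) (G : nat) (p : R) (E : pred (outcome G)) : R :=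
  \sum_(w : outcome G | E w) weight p w.

Definition condPr (R : realType) (G : nat) (p : R) (E S : pred (outcome G)) : R :=
  Pr p [pred w | E w && S w] / Pr p S.

Definition condE (R : realType) (G : nat) (p : R) (X : outcome G -> R)
  (S : pred (outcome G)) : R :=
  (\sum_(w : outcome G | S w) weight p w * X w) / Pr p S.

Definition Rsum (G : nat) (w : outcome G) : nat := \sum_(j < G) nat_of_bool (w j).

Definition phat (R : realType) (G : nat) (w : outcome G) : R := (Rsum w)%:R / G%:R.

Definition Ahat (R : realType) (G : nat) (i : 'I_G) (w : outcome G) : R :=
  (nat_of_bool (w i))%:R - phat R w.

Definition Aexp (R : realType) (G : nat) (p : R) (i : 'I_G) (w : outcome G) : R :=
  (nat_of_bool (w i))%:R - p.

Definition nondeg (G : nat) : pred (outcome G) :=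
  [pred w | (1 <= Rsum w)%N && (Rsum w <= G - 1)%N].

(* Main.v *)
Require Import Defs.
From HB Require Import structures.
From mathcomp Require Import all_boot all_order all_algebra.
From mathcomp Require Import reals.
From mathcomp Require Import zify ring lra.
Import Order.TTheory GRing.Theory Num.Theory.
Local Open Scope ring_scope.

Lemma Rsum_card G (w : outcome G) : Rsum w = #|[set j | w j]|.
Proof.
rewrite /Rsum -sum1_card [in RHS]big_mkcond /=.
by apply: eq_bigr => j _; rewrite inE; case: (w j).
Qed.

Lemma weight_set (R : realType) G (p : R) (A : {set 'I_G}) :
  weight p [ffun j => j \in A] = p ^+ #|A| * (1 - p) ^+ (G - #|A|).
Proof.
rewrite /weight (bigID (mem A)) /=.
have -> : \prod_(j < G | j \in A) (if [ffun j0 => j0 \in A] j then p else 1 - p) = p ^+ #|A|.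
  by rewrite -prodr_const; apply: eq_bigr => j jA; rewrite ffunE jA.
have -> : \prod_(j < G | j \notin A) (if [ffun j0 => j0 \in A] j then p else 1 - p) = (1-p) ^+ #|~: A|.
  rewrite -prodr_const; apply: eq_big => j; first by rewrite inE.
  by rewrite ffunE => /negbTE ->.
have hc := cardsC A; rewrite card_ord in hc.
have e : (G - #|A| = #|~: A|)%N by rewrite -{1}hc addKn.
by rewrite e.
Qed.

Lemma keyP (R : realType) G (p : R) (P : pred nat) :
  \sum_(w : outcome G | P (Rsum w)) weight p w =
  \sum_(k < G.+1 | P k) ('C(G, k))%:R * p ^+ k * (1 - p) ^+ (G - k).
Proof.
have h1 : forall A : {set 'I_G}, [set j | [ffun j0 => j0 \in A] j] = A.
  move=> A; apply/setP => j; rewrite inE ffunE; reflexivity.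
rewrite (reindex (fun A : {set 'I_G} => [ffun j => j \in A])) /=; last first.
  exists (fun w : outcome G => [set j | w j]) => [A _|w _].
    exact: h1.
  by apply/ffunP => j; rewrite ffunE inE.
have E : forall A : {set 'I_G}, Rsum [ffun j => j \in A] = #|A|.
  by move=> A; rewrite Rsum_card h1.
rewrite (eq_bigl (fun A : {set 'I_G} => P #|A|)); last by move=> A; rewrite E.
rewrite (eq_bigr (fun A : {set 'I_G} => p ^+ #|A| * (1 - p) ^+ (G - #|A|))); last by move=> A _; rewrite weight_set.
rewrite (partition_big (fun A : {set 'I_G} => (inord #|A| : 'I_G.+1)) (fun k : 'I_G.+1 => P k)) /=; last first.
  move=> A PA; rewrite inordK //; have := max_card (mem A); rewrite card_ord; by [].
apply: eq_bigr => k Pk.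
have Ek : forall A : {set 'I_G}, P #|A| && (inord #|A| == k) = (#|A| == k).
  move=> A; have hA : (#|A| < G.+1)%N by have := max_card (mem A); rewrite card_ord.
  apply/idP/idP.
    by case/andP=> _ /eqP <-; rewrite inordK.
  by move/eqP=> hk; rewrite hk Pk /=; apply/eqP/val_inj; rewrite /= inordK // hk.
rewrite (eq_bigl _ _ Ek).
rewrite (eq_bigr (fun _ => p ^+ k * (1 - p) ^+ (G - k))); last by move=> A /eqP ->.
rewrite sumr_const.
have -> : #|[pred A : {set 'I_G} | #|A| == k]| = 'C(G, k).
  have := card_draws 'I_G k; rewrite card_ord => <-. apply: eq_card => A; rewrite inE. by [].
by rewrite -[LHS]mulr_natl mulrA.
Qed.

Lemma keyP' (R : realType) G (p : R) (E : pred (outcome G)) (P : pred nat) :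
  (forall w, E w = P (Rsum w)) ->
  Pr p E = \sum_(k < G.+1 | P k) ('C(G, k))%:R * p ^+ k * (1 - p) ^+ (G - k).
Proof. move=> h; rewrite /Pr (eq_bigl _ _ h); exact: keyP. Qed.
Lemma PrS (R : realType) G (p : R) : (1 <= G)%N ->
  Pr p (@nondeg G) = 1 - (1 - p) ^+ G - p ^+ G.
Proof.
move=> hG.
have -> : Pr p (@nondeg G) = \sum_(k < G.+1 | (1 <= k)%N && (k <= G - 1)%N) ('C(G, k))%:R * p ^+ k * (1 - p) ^+ (G - k).
  by rewrite -(keyP _ _ p (fun k => (1 <= k)%N && (k <= G - 1)%N)).
set t := fun k : 'I_G.+1 => ('C(G, k))%:R * p ^+ k * (1 - p) ^+ (G - k).
have tot : \sum_(k < G.+1) t k = 1.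
  rewrite -(expr1n R G) -{1}(subrK p 1) exprDn.
  apply: eq_bigr => k _; rewrite /t -mulr_natl; ring.
have hS : \sum_(k < G.+1 | ~~ ((1 <= k)%N && (k <= G - 1)%N)) t k = t ord0 + t ord_max.
  rewrite (bigD1 ord0) //= (big_pred1 ord_max) // => k /=; apply/idP/idP.
    move/andP=> [h1 h2]; apply/eqP/val_inj => /=.
    have := ltn_ord k; move: h1 h2; rewrite -val_eqE /=; lia.
  move/eqP=> -> /=; apply/andP; split; last by rewrite -val_eqE /=; lia.
  lia.
move: tot; rewrite (bigID (fun k : 'I_G.+1 => (1 <= k)%N && (k <= G - 1)%N)) /= hS.
rewrite /t /= subn0 subnn bin0 binn expr0 !mulr1 !mul1r => e.
lra.
Qed.
Theorem theorem2 (R : realType) (G : nat) (p : R) (i : 'I_G) :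
  (2 <= G)%N -> 0 < p -> p < 1 ->
  (p < 1 / 2 ->
   forall eps : R, 0 < eps -> eps < condE p (@phat R G) (@nondeg G) - p ->
   condPr p [pred w | Aexp p i w - Ahat R i w > eps] (@nondeg G) =
   (\sum_(k < G | Num.floor (G%:R * (p + eps)) < k%:Z)
       ('C(G, k))%:R * p ^+ k * (1 - p) ^+ (G - k))
   / (1 - (1 - p) ^+ G - p ^+ G)) /\
  (1 / 2 < p ->
   forall eps : R, 0 < eps -> eps < p - condE p (@phat R G) (@nondeg G) ->
   condPr p [pred w | Ahat R i w - Aexp p i w > eps] (@nondeg G) =
   (\sum_(k < G.+1 | (1 <= k)%N && (k%:Z < Num.ceil (G%:R * (p - eps))))
       ('C(G, k))%:R * p ^+ k * (1 - p) ^+ (G - k))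
   / (1 - (1 - p) ^+ G - p ^+ G)).
Proof.
move=> hG hp0 hp1.
have G0 : (0 : R) < G%:R by rewrite ltr0n; lia.
have D : forall w : outcome G, Aexp p i w - Ahat R i w = (Rsum w)%:R / G%:R - p.
  by move=> w; rewrite /Aexp /Ahat /phat; ring.
rewrite /condPr PrS; last lia.
split=> _ eps he _.
- congr (_ / _).
  rewrite (keyP' _ _ _ _ (fun k => (eps < k%:R / G%:R - p) && ((1 <= k)%N && (k <= G - 1)%N))); last first.
    by move=> w /=; rewrite D.
  rewrite big_mkcond big_ord_recr /=.
  rewrite [X in _ + X]ifF; last by apply/negbTE; rewrite negb_and; apply/orP; right; apply/negP; lia.
  rewrite addr0 [RHS]big_mkcond; apply: eq_bigr => k _ /=.
  congr (if _ then _ else _).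
  rewrite floor_lt_int ltrBrDr ltr_pdivlMr // mulrC [p + eps]addrC.
  have -> : (k%:Z)%:~R = k%:R :> R by [].
  case h : (G%:R * (eps + p) < k%:R) => //=.
  have kG := ltn_ord k.
  have k0 : (0 : R) < k%:R by apply: lt_trans h; apply: mulr_gt0 => //; lra.
  rewrite ltr0n in k0; apply/andP; split; lia.
- congr (_ / _).
  rewrite (keyP' _ _ _ _ (fun k => (eps < p - k%:R / G%:R) && ((1 <= k)%N && (k <= G - 1)%N))); last first.
    move=> w /=; have -> : Ahat R i w - Aexp p i w = p - (Rsum w)%:R / G%:R by rewrite /Aexp /Ahat /phat; ring.
    by [].
  apply: eq_bigl => k /=.
  rewrite ceil_gt_int.
  have -> : (k%:Z)%:~R = k%:R :> R by [].
  have -> : (eps < p - k%:R / G%:R) = (k%:R < G%:R * (p - eps)).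
    rewrite ltrBrDr addrC -ltrBrDr ltr_pdivrMr // mulrC; by [].
  case h : (k%:R < G%:R * (p - eps)); rewrite ?andbF ?andbT //.
  have : (k%:R : R) < G%:R by nra.
  rewrite ltr_nat => kG.
  have -> : (k <= G - 1)%N = true by apply/idP; lia.
  by rewrite andbT.
Qed.
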